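(* Let $X$ be a set, $B=(B,+,0)$ a unitary magma, and let $(A,k,q,s,p)$ and $(A',k',q',s',p')$ be two retraction points from $X$ to $B$. If there exists a morphism of unitary magmas $\alpha\colon A\to A'$ such that $\alpha k=k'$, $\alpha s=s'$ and $q'\alpha=q$, then $\alpha$ is an isomorphism.
   Context: A unitary magma is a set with a binary operation $+$ and an element $0$ with $b+0=b=0+b$ for all $b$; morphisms preserve $+$ and $0$. Given a set $X$ and a unitary magma $B$, a retraction point from $X$ to $B$ is a tuple $(A,k,q,s,p)$ where $A=(A,+,0)$ is a unitary magma, $k\colon X\to A$ and $q\colon A\to X$ are maps, $s\colon B\to A$ and $p\colon A\to B$ are morphisms of unitary magmas, and $p(s(b))=b$, $q(k(x))=x$, $p(k(x))=0$, $q(s(b))=q(0)$, and $k(q(a))+s(p(a))=a$ for all $x\in X$, $b\in B$, $a\in A$. *)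

(* Defs.v *)
Set Implicit Arguments.

Record UMagma := {
  um_car :> Type;
  um_op : um_car -> um_car -> um_car;
  um_zero : um_car;
  um_right_unit : forall b, um_op b um_zero = b;
  um_left_unit : forall b, um_op um_zero b = b
}.

Arguments um_op {_} _ _.
Arguments um_zero {_}.

Definition is_um_morphism {A B : UMagma} (f : A -> B) : Prop :=
  (forall a1 a2 : A, f (um_op a1 a2) = um_op (f a1) (f a2)) /\ f um_zero = um_zero.

Definition is_retraction_point {X : Type} {B A : UMagma}
  (k : X -> A) (q : A -> X) (s : B -> A) (p : A -> B) : Prop :=
  is_um_morphism s /\ is_um_morphism p /\
  (forall b : B, p (s b) = b) /\
  (forall x : X, q (k x) = x) /\
  (forall x : X, p (k x) = um_zero) /\
  (forall b : B, q (s b) = q um_zero) /\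
  (forall a : A, um_op (k (q a)) (s (p a)) = a).

Definition is_um_isomorphism {A B : UMagma} (f : A -> B) : Prop :=
  is_um_morphism f /\
  exists g : B -> A, is_um_morphism g /\
    (forall a, g (f a) = a) /\ (forall b, f (g b) = b).

(* Main.v *)
Require Import Defs.

Theorem proposition2p3 (X : Type) (B A A' : UMagma)
  (k : X -> A) (q : A -> X) (s : B -> A) (p : A -> B)
  (k' : X -> A') (q' : A' -> X) (s' : B -> A') (p' : A' -> B)
  (HR : is_retraction_point k q s p)
  (HR' : is_retraction_point k' q' s' p')
  (alpha : A -> A')
  (Halpha : is_um_morphism alpha)
  (Hk : forall x, alpha (k x) = k' x)
  (Hs : forall b, alpha (s b) = s' b)
  (Hq : forall a, q' (alpha a) = q a) :
  is_um_isomorphism alpha.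
Proof.
  destruct HR as [[Ss0 Ss1] [[Sp0 Sp1] [Hps [Hqk [Hpk [Hqs Hdec]]]]]].
  destruct HR' as [[Ss0' Ss1'] [[Sp0' Sp1'] [Hps' [Hqk' [Hpk' [Hqs' Hdec']]]]]].
  destruct Halpha as [Ha0 Ha1].
  set (beta := fun a' => um_op (k (q' a')) (s (p' a'))).
  assert (H1 : forall a', alpha (beta a') = a').
  { intro a'. unfold beta. rewrite Ha0, Hk, Hs. apply Hdec'. }
  assert (Hp : forall a, p' (alpha a) = p a).
  { intro a. pattern a at 1. rewrite <- (Hdec a). rewrite Ha0, Hk, Hs, Sp0', Hpk', Hps'.
    apply um_left_unit. }
  assert (H2 : forall a, beta (alpha a) = a).
  { intro a. unfold beta. rewrite Hq, Hp. apply Hdec. }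
  split; [split; assumption|].
  exists beta. split; [|split; assumption].
  split.
  - intros x y. transitivity (beta (um_op (alpha (beta x)) (alpha (beta y)))).
    + rewrite H1, H1. reflexivity.
    + rewrite <- Ha0. apply H2.
  - rewrite <- Ha1. apply H2.
Qed.
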